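(* Fix an integer $q_1\ge2$. For any positive real numbers $s,t$ and any integer $r\ge4$, $$\lim_{m\to\infty}\frac{a^{\operatorname{int2,r}}_m(t)}{m^s}=0,\qquad \lim_{m\to\infty}\frac{a^{\operatorname{int1,r}}_m(t)}{a^{\operatorname{int2,r}}_m(s)}=0,\qquad \lim_{m\to\infty}\frac{(\ln m)^t}{a^{\operatorname{int1,r}}_m(s)}=0.$$
   Context: $\Gamma$ denotes the Gamma function; for an integer $r\ge4$, $\Gamma_r:\mathbb{R}^+\to\mathbb{R}^+$ is $\Gamma_r(x)=[\Gamma(x^{1/r}+1)]^r$, which is increasing (hence invertible onto its image). Define $a^{\operatorname{int1,r}}_m(t)=m^{t/\Gamma_r^{-1}(\ln m/\ln q_1)}$ and $a^{\operatorname{int2,r}}_m(t)=m^{t/[\Gamma_r^{-1}(\ln m/\ln q_1)]^{(r-2)/r}}$ (for $m$ large enough that these are defined). *)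

(* Defs.v *)
From Stdlib Require Import Reals ClassicalEpsilon.
From Coquelicot Require Import Coquelicot.
Open Scope R_scope.

Definition Gamma (x : R) : R :=
  RInt_gen (fun u => Rpower u (x - 1) * exp (- u)) (at_right 0) (Rbar_locally p_infty).

Definition Gamma_r (r : nat) (x : R) : R :=
  (Gamma (Rpower x (/ INR r) + 1)) ^ r.

(* Gamma_r^{-1}(y): a positive x with Gamma_r x = y (the unique one whenever
   y is in the image of the injective part; chosen arbitrarily otherwise). *)
Definition Gamma_r_inv (r : nat) (y : R) : R :=
  epsilon (inhabits 0) (fun x => 0 < x /\ Gamma_r r x = y).

Definition a_int1 (q1 r m : nat) (t : R) : R :=
  Rpower (INR m) (t / Gamma_r_inv r (ln (INR m) / ln (INR q1))).

Definition a_int2 (q1 r m : nat) (t : R) : R :=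
  Rpower (INR m) (t / Rpower (Gamma_r_inv r (ln (INR m) / ln (INR q1))) ((INR r - 2) / INR r)).

(* Main.v *)
Require Import Defs.
From Stdlib Require Import Reals Lra Psatz ClassicalEpsilon.
From Coquelicot Require Import Coquelicot.
Open Scope R_scope.

Lemma int_exp_half (C a b : R) :
  is_RInt (fun u => C * exp (- u / 2)) a b (2 * C * (exp (- a / 2) - exp (- b / 2))).
Proof.
  set (F := fun u => -2 * C * exp (- u / 2)).
  replace (2 * C * (exp (- a / 2) - exp (- b / 2))) with (minus (F b) (F a)).
  2:{ unfold F, minus, plus, opp; simpl; ring. }
  apply (is_RInt_derive F).
  - intros x _. unfold F. auto_derive; auto. unfold Rdiv; field.
  - intros x _. apply (ex_derive_continuous (fun u => C * exp (- u / 2))).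
    auto_derive; auto.
Qed.

Lemma rint_bound (h : R -> R) (C a b : R) :
  (forall u, 0 < u -> continuous h u) ->
  (forall u, 0 < u -> Rabs (h u) <= C * exp (- u / 2)) ->
  0 < a -> a <= b ->
  ex_RInt h a b /\ Rabs (RInt h a b) <= 2 * C * (exp (- a / 2) - exp (- b / 2)).
Proof.
  intros hc hb ha hab.
  assert (ex : ex_RInt h a b).
  { apply (ex_RInt_continuous (V:=R_CompleteNormedModule)). intros z Hz. apply hc.
    rewrite Rmin_left in Hz; lra. }
  split; [exact ex|].
  assert (eg : ex_RInt (fun u => C * exp (- u / 2)) a b) by (eexists; apply int_exp_half).
  assert (eg' : ex_RInt (fun u => - (C * exp (- u / 2))) a b).
  { apply (ex_RInt_opp (V := R_NormedModule)) in eg. exact eg. }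
  assert (H1 := RInt_le h _ a b hab ex eg).
  assert (H2 := RInt_le _ h a b hab eg' ex).
  rewrite (is_RInt_unique _ _ _ _ (int_exp_half C a b)) in H1.
  assert (E : RInt (fun u => - (C * exp (- u / 2))) a b = - (2 * C * (exp (- a / 2) - exp (- b / 2)))).
  { apply is_RInt_unique. apply (is_RInt_opp (V := R_NormedModule)) with (f := fun u => C * exp (- u / 2)). apply int_exp_half. }
  rewrite E in H2.
  apply Rabs_le. split.
  - apply H2. intros x Hx. assert (K := hb x ltac:(lra)). apply Rabs_le_between in K. lra.
  - apply H1. intros x Hx. assert (K := hb x ltac:(lra)). apply Rabs_le_between in K. lra.
Qed.

Lemma exp_le (x y : R) : x <= y -> exp x <= exp y.
Proof. intros [H|H]; [left; apply exp_increasing; auto | subst; lra]. Qed.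

Lemma ln_le (x y : R) : 0 < x -> x <= y -> ln x <= ln y.
Proof. intros H [H1|H1]; [left; apply ln_increasing; auto | subst; lra]. Qed.

Lemma rint_bound2 (h : R -> R) (C a b : R) :
  (forall u, 0 < u -> continuous h u) ->
  (forall u, 0 < u -> Rabs (h u) <= C * exp (- u / 2)) ->
  0 < a -> 0 < b ->
  ex_RInt h a b /\ Rabs (RInt h a b) <= 2 * C * Rabs (exp (- a / 2) - exp (- b / 2)).
Proof.
  intros hc hb ha hb0.
  destruct (Rle_or_lt a b) as [hab|hab].
  - destruct (rint_bound h C a b hc hb ha hab) as [e1 e2]. split; auto.
    rewrite (Rabs_right (exp (- a / 2) - exp (- b / 2))); auto.
    assert (exp (- b / 2) <= exp (- a / 2)) by (apply exp_le; lra). lra.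
  - destruct (rint_bound h C b a hc hb hb0 (Rlt_le _ _ hab)) as [e1 e2].
    split. { apply ex_RInt_swap. exact e1. }
    rewrite <- (opp_RInt_swap (V:=R_CompleteNormedModule)) by exact e1.
    unfold opp; simpl. rewrite Rabs_Ropp.
    rewrite (Rabs_left1 (exp (- a / 2) - exp (- b / 2))).
    + assert (exp (- a / 2) <= exp (- b / 2)) by (apply exp_le; lra). lra.
    + assert (exp (- a / 2) <= exp (- b / 2)) by (apply exp_le; lra). lra.
Qed.

Lemma ball_R (x e y : R) : ball x e y <-> Rabs (y - x) < e.
Proof. unfold ball; simpl; unfold AbsRing_ball, abs, minus, plus, opp; simpl. tauto. Qed.

Notation F0 := (filter_prod (at_right 0) (Rbar_locally p_infty)).

Lemma F0_proper : ProperFilter F0.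
Proof. exact (@filter_prod_proper _ _ _ _ (at_right_proper_filter 0) (Rbar_locally_filter p_infty)). Qed.

Lemma F0_pos : F0 (fun ab => 0 < fst ab /\ 0 < snd ab).
Proof.
  exists (fun a => 0 < a) (fun b => 0 < b).
  - exists (mkposreal 1 Rlt_0_1). intros y _ H. exact H.
  - exists 0. intros x H. exact H.
  - intros x y H1 H2. simpl. auto.
Qed.

Lemma lim_ge (h : R -> R) (l c : R) :
  is_RInt_gen h (at_right 0) (Rbar_locally p_infty) l ->
  F0 (fun ab => forall y, is_RInt h (fst ab) (snd ab) y -> c <= y) -> c <= l.
Proof.
  intros H Hc. destruct (Rle_or_lt c l) as [|hlt]; auto. exfalso.
  assert (Hb := H (ball l (mkposreal _ (Rgt_minus _ _ hlt))) (locally_ball _ _)).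
  unfold filtermapi in Hb.
  destruct (@filter_ex _ F0 F0_proper _ (filter_and _ _ Hb Hc)) as [ab [[y [Hy1 Hy2]] Hy3]].
  apply Hy3 in Hy1. apply ball_R in Hy2. simpl in Hy2. apply Rabs_lt_between in Hy2. unfold minus, plus, opp in Hy2; simpl in Hy2. lra.
Qed.

Lemma lim_abs (h : R -> R) (l c : R) :
  is_RInt_gen h (at_right 0) (Rbar_locally p_infty) l ->
  F0 (fun ab => forall y, is_RInt h (fst ab) (snd ab) y -> Rabs y <= c) -> Rabs l <= c.
Proof.
  intros H Hc. destruct (Rle_or_lt (Rabs l) c) as [|hlt]; auto. exfalso.
  assert (Hb := H (ball l (mkposreal _ (Rgt_minus _ _ hlt))) (locally_ball _ _)).
  unfold filtermapi in Hb.
  destruct (@filter_ex _ F0 F0_proper _ (filter_and _ _ Hb Hc)) as [ab [[y [Hy1 Hy2]] Hy3]].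
  apply Hy3 in Hy1. apply ball_R in Hy2. simpl in Hy2. unfold minus, plus, opp in Hy2; simpl in Hy2.
  assert (Rabs l <= Rabs y + Rabs (y - l)).
  { replace l with (y - (y - l)) at 1 by ring. unfold Rminus at 1. eapply Rle_trans; [apply Rabs_triang|]. rewrite Rabs_Ropp; lra. }
  change (Rabs (y - l) < Rabs l - c) in Hy2. lra.
Qed.

Lemma exp_neg_le (B : R) : 0 <= B -> exp (- B / 2) <= 2 / (2 + B).
Proof.
  intros HB. assert (H := exp_ineq1_le (B / 2)).
  replace (- B / 2) with (- (B / 2)) by field. rewrite exp_Ropp.
  assert (0 < exp (B / 2)) by apply exp_pos.
  apply Rle_trans with (/ (1 + B / 2)).
  - apply Rinv_le_contravar; lra.
  - right. field. lra.
Qed.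

Lemma gen_exists (h : R -> R) (C : R) :
  0 <= C ->
  (forall u, 0 < u -> continuous h u) ->
  (forall u, 0 < u -> Rabs (h u) <= C * exp (- u / 2)) ->
  exists l, is_RInt_gen h (at_right 0) (Rbar_locally p_infty) l.
Proof.
  intros HC hc hb.
  set (phi := fun ab : R * R => RInt h (fst ab) (snd ab)).
  assert (Hcv : exists y, filterlim phi F0 (locally y)).
  { apply (@filterlim_locally_cauchy _ R_CompleteSpace F0 F0_proper).
    intros eps.
    set (d := eps / (2 * (C + 1))).
    set (B := 8 * (C + 1) / eps).
    assert (hd : 0 < d) by (unfold d; apply Rdiv_lt_0_compat; [apply cond_pos|lra]).
    assert (hB : 0 < B) by (unfold B; apply Rdiv_lt_0_compat; [lra|apply cond_pos]).
    exists (fun ab => (0 < fst ab < d) /\ B < snd ab).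
    split.
    - exists (fun a => 0 < a < d) (fun b => B < b).
      + exists (mkposreal d hd). intros y Hy H. split; auto.
        apply ball_R in Hy. simpl in Hy. change (Rabs (y - 0) < d) in Hy.
        rewrite Rminus_0_r, Rabs_right in Hy; lra.
      + exists B. auto.
      + intros x y H1 H2. simpl. auto.
    - intros [a b] [a' b'] [[Ha1 Ha2] Hb] [[Ha1' Ha2'] Hb']. simpl in *.
      change (Rabs (RInt h a' b' - RInt h a b) < eps).
      destruct (rint_bound2 h C a a' hc hb Ha1 Ha1') as [e1 i1].
      destruct (rint_bound2 h C a' b' hc hb Ha1' ltac:(lra)) as [e2 i2].
      destruct (rint_bound2 h C b' b hc hb ltac:(lra) ltac:(lra)) as [e3 i3].
      assert (E : RInt h a b = RInt h a a' + RInt h a' b' + RInt h b' b).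
      { rewrite <- (RInt_Chasles (V:=R_CompleteNormedModule) h a a' b e1).
        2:{ apply (ex_RInt_Chasles (V:=R_CompleteNormedModule) h a' b' b); auto. }
        rewrite <- (RInt_Chasles (V:=R_CompleteNormedModule) h a' b' b e2 e3).
        unfold plus; simpl. ring. }
      rewrite E.
      replace (RInt h a' b' - (RInt h a a' + RInt h a' b' + RInt h b' b))
        with (- (RInt h a a' + RInt h b' b)) by ring.
      rewrite Rabs_Ropp.
      assert (X1 : Rabs (exp (- a / 2) - exp (- a' / 2)) <= d / 2).
      { assert (exp (- d / 2) <= exp (- a / 2) <= 1).
        { split; [apply exp_le; lra|]. rewrite <- exp_0. apply exp_le; lra. }
        assert (exp (- d / 2) <= exp (- a' / 2) <= 1).
        { split; [apply exp_le; lra|]. rewrite <- exp_0. apply exp_le; lra. }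
        assert (H3 := exp_ineq1_le (- d / 2)).
        apply Rabs_le. lra. }
      assert (X2 : Rabs (exp (- b' / 2) - exp (- b / 2)) <= 2 / (2 + B)).
      { assert (0 < exp (- b / 2) <= exp (- B / 2)).
        { split; [apply exp_pos|apply exp_le; lra]. }
        assert (0 < exp (- b' / 2) <= exp (- B / 2)).
        { split; [apply exp_pos|apply exp_le; lra]. }
        assert (H3 := exp_neg_le B ltac:(lra)).
        apply Rabs_le. lra. }
      eapply Rle_lt_trans; [apply Rabs_triang|].
      assert (Y1 : 2 * C * (d / 2) < eps / 2).
      { unfold d. assert (0 < eps) by apply cond_pos.
        replace (2 * C * (eps / (2 * (C + 1)) / 2)) with (eps / 2 * (C / (C + 1))) by (field; lra).
        assert (C / (C + 1) < 1). { apply (Rmult_lt_reg_r (C + 1)); [lra|]. unfold Rdiv. rewrite Rmult_assoc, Rinv_l by lra. lra. }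
        nra. }
      assert (Y2 : 2 * C * (2 / (2 + B)) < eps / 2).
      { assert (0 < eps) by apply cond_pos.
        assert (2 / (2 + B) < 2 / B).
        { apply Rmult_lt_compat_l; [lra|]. apply Rinv_lt_contravar; nra. }
        assert (2 * C * (2 / B) <= eps / 2).
        { unfold B. replace (2 * C * (2 / (8 * (C + 1) / eps))) with (eps / 2 * (C / (C + 1))) by (field; split; lra).
          assert (C / (C + 1) < 1). { apply (Rmult_lt_reg_r (C + 1)); [lra|]. unfold Rdiv. rewrite Rmult_assoc, Rinv_l by lra. lra. }
          nra. }
        assert (2 * C * (2 / (2 + B)) <= 2 * C * (2 / B)) by (apply Rmult_le_compat_l; lra).
        destruct (Req_dec C 0) as [->|HC0].
        - replace (2 * 0 * (2 / (2 + B))) with 0 by ring. lra.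
        - assert (2 * C * (2 / (2 + B)) < 2 * C * (2 / B)) by (apply Rmult_lt_compat_l; lra). lra. }
      assert (Z1 : Rabs (RInt h a a') <= 2 * C * (d / 2)).
      { eapply Rle_trans; [exact i1|]. apply Rmult_le_compat_l; lra. }
      assert (Z2 : Rabs (RInt h b' b) <= 2 * C * (2 / (2 + B))).
      { eapply Rle_trans; [exact i3|]. apply Rmult_le_compat_l; lra. }
      lra. }
  destruct Hcv as [y Hy]. exists y.
  intros P HP. unfold filtermapi.
  apply (filter_imp (fun ab => P (phi ab) /\ (0 < fst ab /\ 0 < snd ab))).
  - intros [a b] [H1 [H2 H3]]. exists (phi (a, b)). split; auto.
    apply (RInt_correct (V:=R_CompleteNormedModule)).
    destruct (rint_bound2 h C a b hc hb H2 H3) as [e _]. exact e.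
  - apply filter_and; [apply Hy; exact HP | apply F0_pos].
Qed.

Lemma gen_abs_bound (h : R -> R) (C l : R) :
  (forall u, 0 < u -> continuous h u) ->
  (forall u, 0 < u -> Rabs (h u) <= C * exp (- u / 2)) ->
  is_RInt_gen h (at_right 0) (Rbar_locally p_infty) l -> Rabs l <= 2 * C.
Proof.
  intros hc hb Hl. apply (lim_abs h); auto.
  apply (filter_imp (fun ab => 0 < fst ab /\ 0 < snd ab)); [|apply F0_pos].
  intros [a b] [Ha Hb] y Hy. simpl in *.
  destruct (rint_bound2 h C a b hc hb Ha Hb) as [e i].
  rewrite <- (is_RInt_unique (V:=R_CompleteNormedModule) _ _ _ _ Hy).
  eapply Rle_trans; [exact i|].
  assert (0 <= C).
  { assert (H1 := hb 1 Rlt_0_1). set (ee := exp _) in H1. assert (H2 : 0 < ee) by apply exp_pos.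
    assert (0 <= Rabs (h 1)) by apply Rabs_pos. nra. }
  assert (0 < exp (- a / 2) <= 1).
  { split; [apply exp_pos|]. rewrite <- exp_0. apply exp_le; lra. }
  assert (0 < exp (- b / 2) <= 1).
  { split; [apply exp_pos|]. rewrite <- exp_0. apply exp_le; lra. }
  assert (Rabs (exp (- a / 2) - exp (- b / 2)) <= 1) by (apply Rabs_le; lra).
  replace (2 * C) with (2 * C * 1) at 2 by ring.
  apply Rmult_le_compat_l; lra.
Qed.

Definition fv (v u : R) : R := Rpower u (v - 1) * exp (- u).

Lemma fv_cont (v u : R) : 0 < u -> continuous (fv v) u.
Proof.
  intros hu. unfold fv, Rpower.
  apply (ex_derive_continuous (fun u => exp ((v - 1) * ln u) * exp (- u))).
  auto_derive. lra.
Qed.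

Lemma fv_pos (v u : R) : 0 < fv v u.
Proof. unfold fv, Rpower. apply Rmult_lt_0_compat; apply exp_pos. Qed.

Lemma pow_exp_bound (p u : R) : 0 <= p -> 0 < u -> p * ln u <= p * ln (2 * p + 2) + u / 2.
Proof.
  intros hp hu.
  assert (H := exp_ineq1_le (ln (u / (2 * p + 2)))).
  rewrite exp_ln in H by (apply Rdiv_lt_0_compat; lra).
  rewrite ln_div in H by lra.
  assert (p * (ln u - ln (2 * p + 2)) <= p * (u / (2 * p + 2) - 1)) by (apply Rmult_le_compat_l; lra).
  assert (p * (u / (2 * p + 2)) <= u / 2).
  { replace (p * (u / (2 * p + 2))) with (u / 2 * (p / (p + 1))) by (field; lra).
    assert (p / (p + 1) <= 1).
    { apply (Rmult_le_reg_r (p + 1)); [lra|]. unfold Rdiv. rewrite Rmult_assoc, Rinv_l by lra. lra. }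
    assert (0 <= u / 2) by lra. nra. }
  nra.
Qed.

Lemma fv_bound (v u : R) : 1 <= v -> 0 < u ->
  Rabs (fv v u) <= exp ((v - 1) * ln (2 * v)) * exp (- u / 2).
Proof.
  intros hv hu. rewrite Rabs_right by (left; apply fv_pos).
  unfold fv, Rpower. rewrite <- !exp_plus. apply exp_le.
  assert (H := pow_exp_bound (v - 1) u ltac:(lra) hu).
  replace (2 * (v - 1) + 2) with (2 * v) in H by ring. lra.
Qed.

Lemma Gamma_is (v : R) : 1 <= v ->
  is_RInt_gen (fv v) (at_right 0) (Rbar_locally p_infty) (Gamma v).
Proof.
  intros hv.
  destruct (gen_exists (fv v) (exp ((v - 1) * ln (2 * v)))) as [l Hl].
  - left; apply exp_pos.
  - intros; apply fv_cont; auto.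
  - intros; apply fv_bound; auto.
  - replace (Gamma v) with l; auto.
    symmetry. unfold Gamma. apply (is_RInt_gen_unique (V:=R_CompleteNormedModule)). exact Hl.
Qed.

Lemma Gamma_upper (v : R) : 1 <= v -> Rabs (Gamma v) <= 2 * exp ((v - 1) * ln (2 * v)).
Proof.
  intros hv. apply (gen_abs_bound (fv v)); [intros; apply fv_cont; auto | intros; apply fv_bound; auto | apply Gamma_is; auto].
Qed.

Lemma ex_fv (v a b : R) : 0 < a -> 0 < b -> ex_RInt (fv v) a b.
Proof.
  intros ha hb. apply (ex_RInt_continuous (V:=R_CompleteNormedModule)).
  intros z Hz. apply fv_cont.
  assert (0 < Rmin a b) by (apply Rmin_glb_lt; auto). lra.
Qed.

Lemma Gamma_lower (v : R) : 1 <= v -> exp (4 * (v - 1)) * exp (- (exp 4 + 1)) <= Gamma v.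
Proof.
  intros hv. set (K := exp 4).
  assert (hK : 0 < K) by apply exp_pos.
  apply (lim_ge (fv v)); [apply Gamma_is; auto|].
  exists (fun a => 0 < a < K) (fun b => K + 1 < b).
  - exists (mkposreal K hK). intros y Hy H. split; auto.
    change (Rabs (y - 0) < K) in Hy. rewrite Rminus_0_r, Rabs_right in Hy; lra.
  - exists (K + 1). auto.
  - intros a b [Ha1 Ha2] Hb y Hy. simpl.
    rewrite <- (is_RInt_unique (V:=R_CompleteNormedModule) _ _ _ _ Hy).
    assert (e1 := ex_fv v a K Ha1 hK).
    assert (e2 := ex_fv v K (K + 1) hK ltac:(lra)).
    assert (e3 := ex_fv v (K + 1) b ltac:(lra) ltac:(lra)).
    cbn [fst snd]. rewrite <- (RInt_Chasles (V:=R_CompleteNormedModule) (fv v) a K b e1).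
    2:{ apply (ex_RInt_Chasles (V:=R_CompleteNormedModule) (fv v) K (K + 1) b); auto. }
    rewrite <- (RInt_Chasles (V:=R_CompleteNormedModule) (fv v) K (K + 1) b e2 e3).
    unfold plus; simpl.
    assert (0 <= RInt (fv v) a K) by (apply RInt_ge_0; [lra|auto|intros; left; apply fv_pos]).
    assert (0 <= RInt (fv v) (K + 1) b) by (apply RInt_ge_0; [lra|auto|intros; left; apply fv_pos]).
    set (c := exp (4 * (v - 1)) * exp (- (K + 1))).
    assert (c <= RInt (fv v) K (K + 1)).
    { replace c with (RInt (fun _ => c) K (K + 1)).
      2:{ rewrite (RInt_const (V:=R_CompleteNormedModule)). unfold scal; simpl; unfold mult; simpl. ring. }
      apply RInt_le; [lra| apply (ex_RInt_const (V:=R_NormedModule)) | auto |].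
      intros x Hx. unfold c, fv, Rpower. rewrite <- !exp_plus. apply exp_le.
      assert (ln K <= ln x) by (apply ln_le; lra).
      unfold K in *. rewrite ln_exp in *.
      assert (4 * (v - 1) <= (v - 1) * ln x) by nra. lra. }
    lra.
Qed.

Lemma Gamma_pos (v : R) : 1 <= v -> 0 < Gamma v.
Proof.
  intros hv. eapply Rlt_le_trans; [|apply Gamma_lower; auto].
  apply Rmult_lt_0_compat; apply exp_pos.
Qed.

Lemma exp_diff (A B : R) : Rabs (exp A - exp B) <= Rabs (A - B) * (exp A + exp B).
Proof.
  assert (H1 := exp_ineq1_le (A - B)). assert (H2 := exp_ineq1_le (B - A)).
  replace (exp (A - B)) with (exp A * exp (- B)) in H1 by (rewrite <- exp_plus; f_equal; ring).
  replace (exp (B - A)) with (exp B * exp (- A)) in H2 by (rewrite <- exp_plus; f_equal; ring).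
  rewrite exp_Ropp in H1, H2.
  assert (hA := exp_pos A). assert (hB := exp_pos B).
  assert (L1 : exp B * (1 + (A - B)) <= exp A).
  { apply (Rmult_le_compat_l (exp B)) in H1; [|lra].
    replace (exp B * (exp A * / exp B)) with (exp A) in H1 by (field; lra). lra. }
  assert (L2 : exp A * (1 + (B - A)) <= exp B).
  { apply (Rmult_le_compat_l (exp A)) in H2; [|lra].
    replace (exp A * (exp B * / exp A)) with (exp B) in H2 by (field; lra). lra. }
  destruct (Rle_or_lt B A) as [h|h].
  - rewrite (Rabs_right (A - B)) by lra. apply Rabs_le. split; nra.
  - rewrite (Rabs_left (A - B)) by lra. apply Rabs_le. split; nra.
Qed.

Lemma lnpow_bound (y Y u : R) : 1 / 2 <= y <= Y -> 0 < u ->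
  Rabs (ln u) * exp (y * ln u) <= (2 + exp ((Y + 1) * ln (2 * (Y + 1) + 2))) * exp (u / 2).
Proof.
  intros [hy1 hy2] hu.
  assert (hE : 1 <= exp (u / 2)) by (rewrite <- exp_0; apply exp_le; lra).
  assert (hK : 0 < exp ((Y + 1) * ln (2 * (Y + 1) + 2))) by apply exp_pos.
  destruct (Rle_or_lt 1 u) as [h1|h1].
  - assert (hl : 0 <= ln u) by (rewrite <- ln_1; apply ln_le; lra).
    rewrite Rabs_right by lra.
    assert (ln u <= exp (ln u)) by (assert (H := exp_ineq1_le (ln u)); lra).
    assert (ln u * exp (y * ln u) <= exp (ln u) * exp (y * ln u)).
    { apply Rmult_le_compat_r; [left; apply exp_pos|lra]. }
    rewrite <- exp_plus in H0.
    assert (exp (ln u + y * ln u) <= exp ((Y + 1) * ln u)) by (apply exp_le; nra).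
    assert (H3 := pow_exp_bound (Y + 1) u ltac:(lra) hu).
    assert (exp ((Y + 1) * ln u) <= exp ((Y + 1) * ln (2 * (Y + 1) + 2)) * exp (u / 2)).
    { rewrite <- exp_plus. apply exp_le. lra. }
    assert (0 < exp (u / 2)) by apply exp_pos.
    nra.
  - assert (hl : ln u < 0) by (rewrite <- ln_1; apply ln_increasing; lra).
    rewrite Rabs_left by lra.
    set (s := exp (ln u / 2)).
    assert (hs : 0 < s) by apply exp_pos.
    assert (exp (y * ln u) <= s) by (apply exp_le; nra).
    assert (H4 := exp_ineq1_le (- (ln u / 2))).
    rewrite exp_Ropp in H4. fold s in H4.
    assert (- (ln u / 2) * s <= 1 - s).
    { apply (Rmult_le_compat_r s) in H4; [|lra].
      replace (/ s * s) with 1 in H4 by (field; lra). nra. }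
    assert (- ln u * exp (y * ln u) <= 2).
    { assert (- ln u * exp (y * ln u) <= - ln u * s) by (apply Rmult_le_compat_l; lra). nra. }
    nra.
Qed.

Lemma Gamma_lip (v w V : R) : 3 / 2 <= v <= V -> 3 / 2 <= w <= V ->
  Rabs (Gamma v - Gamma w) <= 4 * Rabs (v - w) * (2 + exp (V * ln (2 * V + 2))).
Proof.
  intros hv hw.
  set (K2 := 2 + exp (V * ln (2 * V + 2))).
  assert (G1 := Gamma_is v ltac:(destruct hv; lra)).
  assert (G2 := Gamma_is w ltac:(destruct hw; lra)).
  assert (HG := is_RInt_gen_minus (V:=R_NormedModule) _ _ _ _ G1 G2).
  unfold minus, plus, opp in HG; simpl in HG.
  replace (4 * Rabs (v - w) * K2) with (2 * (2 * Rabs (v - w) * K2)) by ring.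
  apply (gen_abs_bound (fun u => fv v u + - fv w u)); [| |exact HG].
  - intros u hu. apply (continuous_plus (fv v) (fun u => - fv w u)); [apply fv_cont; auto|].
    apply (continuous_opp (fv w)). apply fv_cont; auto.
  - intros u hu. unfold fv, Rpower.
    replace (exp ((v - 1) * ln u) * exp (- u) + - (exp ((w - 1) * ln u) * exp (- u)))
      with ((exp ((v - 1) * ln u) - exp ((w - 1) * ln u)) * exp (- u)) by ring.
    rewrite Rabs_mult, (Rabs_right (exp (- u))) by (left; apply exp_pos).
    assert (H := exp_diff ((v - 1) * ln u) ((w - 1) * ln u)).
    replace ((v - 1) * ln u - (w - 1) * ln u) with ((v - w) * ln u) in H by ring.
    rewrite Rabs_mult in H.
    assert (B1 := lnpow_bound (v - 1) (V - 1) u ltac:(lra) hu).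
    assert (B2 := lnpow_bound (w - 1) (V - 1) u ltac:(lra) hu).
    replace (V - 1 + 1) with V in B1, B2 by ring.
    replace (2 * V + 2) with (2 * V + 2) in B1 by ring.
    fold K2 in B1, B2.
    assert (E : exp (- u / 2) = exp (u / 2) * exp (- u)).
    { rewrite <- exp_plus. f_equal. field. }
    rewrite E.
    assert (0 < exp (- u)) by apply exp_pos.
    assert (0 <= Rabs (v - w)) by apply Rabs_pos.
    assert (Rabs (ln u) * (exp ((v - 1) * ln u) + exp ((w - 1) * ln u)) <= 2 * K2 * exp (u / 2)) by lra.
    assert (Rabs (exp ((v - 1) * ln u) - exp ((w - 1) * ln u)) <= Rabs (v - w) * (2 * K2 * exp (u / 2))).
    { eapply Rle_trans; [exact H|]. rewrite Rmult_assoc. apply Rmult_le_compat_l; lra. }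
    apply Rle_trans with (Rabs (v - w) * (2 * K2 * exp (u / 2)) * exp (- u)).
    + apply Rmult_le_compat_r; lra.
    + right. ring.
Qed.

Lemma Gamma_cont (v : R) : 2 <= v -> continuity_pt Gamma v.
Proof.
  intros hv.
  set (K := 4 * (2 + exp ((v + 1) * ln (2 * (v + 1) + 2)))).
  assert (hK : 0 < K) by (unfold K; assert (H := exp_pos ((v + 1) * ln (2 * (v + 1) + 2))); lra).
  unfold continuity_pt, continue_in, limit1_in, limit_in. simpl. unfold R_dist.
  intros eps heps.
  exists (Rmin (1 / 2) (eps / K)). split.
  - apply Rmin_pos; [lra| apply Rdiv_lt_0_compat; lra].
  - intros w [_ Hw].
    assert (H1 := Rmin_l (1 / 2) (eps / K)). assert (H2 := Rmin_r (1 / 2) (eps / K)).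
    apply Rabs_def2 in Hw. destruct Hw as [Hw1 Hw2].
    assert (L := Gamma_lip w v (v + 1) ltac:(split; lra) ltac:(split; lra)).
    fold K in L. replace (4 * Rabs (w - v) * (2 + exp ((v + 1) * ln (2 * (v + 1) + 2)))) with (Rabs (w - v) * K) in L by (unfold K; ring).
    assert (Rabs (w - v) < eps / K) by (apply Rabs_def1; lra).
    assert (Rabs (w - v) * K < eps / K * K) by (apply Rmult_lt_compat_r; lra).
    replace (eps / K * K) with eps in H0 by (field; lra).
    lra.
Qed.

Lemma Rpower_inv_r (r : nat) (z : R) : (1 <= r)%nat -> 0 < z ->
  Rpower (exp (INR r * ln z)) (/ INR r) = z.
Proof.
  intros hr hz. unfold Rpower. rewrite ln_exp.
  assert (0 < INR r) by (apply lt_0_INR; lia).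
  replace (/ INR r * (INR r * ln z)) with (ln z) by (field; lra).
  apply exp_ln; auto.
Qed.

Lemma Gamma_r_exists (r : nat) (L : R) : (1 <= r)%nat -> 1 <= L -> 8 ^ r < L ->
  exists x, 0 < x /\ Gamma_r r x = L.
Proof.
  intros hr hL1 hL.
  set (K := exp 4).
  assert (hK : 0 < K) by apply exp_pos.
  assert (hlnL : 0 <= ln L) by (rewrite <- ln_1; apply ln_le; lra).
  set (V := 2 + (ln L + K + 1) / 4).
  assert (hV : 2 < V) by (unfold V; lra).
  set (f := fun z => Gamma z ^ r - L).
  assert (c : forall a, 2 <= a <= V -> continuity_pt f a).
  { intros a Ha. unfold f.
    apply (continuity_pt_minus (comp (fun y => y ^ r) Gamma) (fct_cte L)).
    - apply continuity_pt_comp; [apply Gamma_cont; lra|].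
      apply derivable_continuous_pt, derivable_pt_pow.
    - apply continuity_pt_const. intros x y; reflexivity. }
  assert (f2 : f 2 < 0).
  { unfold f. assert (H := Gamma_upper 2 ltac:(lra)).
    replace ((2 - 1) * ln (2 * 2)) with (ln 4) in H by (replace (2 * 2) with 4 by ring; ring).
    rewrite exp_ln in H by lra.
    assert (hp := Gamma_pos 2 ltac:(lra)).
    rewrite Rabs_right in H by lra.
    assert (Gamma 2 ^ r <= 8 ^ r) by (apply pow_incr; lra). lra. }
  assert (fV : 0 < f V).
  { unfold f. assert (H := Gamma_lower V ltac:(lra)).
    rewrite <- exp_plus in H. fold K in H.
    replace (4 * (V - 1) + - (K + 1)) with (4 + ln L) in H by (unfold V; field).
    assert (exp (ln L) < exp (4 + ln L)) by (apply exp_increasing; lra).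
    rewrite exp_ln in H0 by lra.
    assert (Gamma V ^ 1 <= Gamma V ^ r) by (apply Rle_pow; [lra|lia]).
    simpl in H1. rewrite Rmult_1_r in H1. lra. }
  destruct (Ranalysis5.IVT_interv f 2 V c hV f2 fV) as [z [Hz Hfz]].
  exists (exp (INR r * ln (z - 1))). split; [apply exp_pos|].
  unfold Gamma_r. rewrite Rpower_inv_r by (auto; lra).
  replace (z - 1 + 1) with z by ring. unfold f in Hfz. lra.
Qed.

Lemma key (q1 r : nat) : (2 <= q1)%nat -> (4 <= r)%nat ->
  forall Lam : R, exists N : nat, forall m : nat, (N <= m)%nat ->
  exists l g : R, Lam <= l /\ 3 * l <= g /\
    Gamma_r_inv r (ln (INR m) / ln (INR q1)) = exp (INR r * l) /\
    ln (INR m) = ln (INR q1) * exp (INR r * g) /\ 1 < INR m.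
Proof.
  intros hq hr Lam.
  set (c := ln (INR q1)).
  assert (hq1 : 2 <= INR q1) by (replace 2 with (INR 2) by (simpl; ring); apply le_INR; auto).
  assert (hc : 0 < c) by (unfold c; rewrite <- ln_1; apply ln_increasing; lra).
  assert (hr0 : 4 <= INR r) by (replace 4 with (INR 4) by (simpl; ring); apply le_INR; auto).
  set (K := exp 4).
  assert (hK : 0 < K) by apply exp_pos.
  set (Lp := Rmax (Rmax Lam K) 0).
  assert (hLp1 : Lam <= Lp) by (unfold Lp; eapply Rle_trans; [apply Rmax_l|apply Rmax_l]).
  assert (hLp2 : K <= Lp) by (unfold Lp; eapply Rle_trans; [apply Rmax_r|apply Rmax_l]).
  set (V := exp Lp + 1).
  set (B := 2 * exp ((V - 1) * ln (2 * V))).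
  set (T := Rmax (Rmax 1 (8 ^ r + 1)) (B ^ r + 1)).
  assert (hT1 : 1 <= T) by (unfold T; eapply Rle_trans; [apply Rmax_l|apply Rmax_l]).
  assert (hT2 : 8 ^ r + 1 <= T) by (unfold T; eapply Rle_trans; [apply Rmax_r|apply Rmax_l]).
  assert (hT3 : B ^ r + 1 <= T) by (unfold T; apply Rmax_r).
  destruct (INR_unbounded (exp (c * T))) as [N HN].
  exists N. intros m hm.
  assert (hmN : INR N <= INR m) by (apply le_INR; auto).
  assert (hm1 : exp (c * T) < INR m) by lra.
  assert (hm0 : 0 < INR m) by (assert (H := exp_pos (c * T)); lra).
  set (L := ln (INR m) / c).
  assert (hLT : T < L).
  { unfold L. assert (ln (exp (c * T)) < ln (INR m)) by (apply ln_increasing; auto; apply exp_pos).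
    rewrite ln_exp in H. apply (Rmult_lt_reg_r c); auto. unfold Rdiv. rewrite Rmult_assoc, Rinv_l by lra. lra. }
  assert (hex : exists x, 0 < x /\ Gamma_r r x = L).
  { apply Gamma_r_exists; [lia|lra|lra]. }
  assert (hspec := epsilon_spec (inhabits 0) (fun x => 0 < x /\ Gamma_r r x = L) hex).
  fold (Gamma_r_inv r L) in hspec.
  set (x := Gamma_r_inv r L) in *.
  destruct hspec as [hx hGx].
  set (l := ln x / INR r).
  assert (hxl : exp (INR r * l) = x).
  { unfold l. replace (INR r * (ln x / INR r)) with (ln x) by (field; lra). apply exp_ln; auto. }
  set (u := exp l).
  assert (hu : Rpower x (/ INR r) = u).
  { unfold Rpower, u, l. f_equal. unfold Rdiv. ring. }
  unfold Gamma_r in hGx. rewrite hu in hGx.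
  assert (hu0 : 0 < u) by apply exp_pos.
  set (G := Gamma (u + 1)) in *.
  assert (hG : 0 < G) by (apply Gamma_pos; lra).
  exists l, (ln G).
  assert (hlL : Lp <= l).
  { destruct (Rle_or_lt Lp l) as [h|h]; auto. exfalso.
    assert (hu1 : u < exp Lp) by (apply exp_increasing; auto).
    assert (HU := Gamma_upper (u + 1) ltac:(lra)). fold G in HU.
    rewrite Rabs_right in HU by lra.
    assert (ln (2 * (u + 1)) <= ln (2 * V)) by (apply ln_le; unfold V; lra).
    assert (0 <= ln (2 * (u + 1))) by (rewrite <- ln_1; apply ln_le; lra).
    assert ((u + 1 - 1) * ln (2 * (u + 1)) <= (V - 1) * ln (2 * V)).
    { unfold V in *. nra. }
    assert (G <= B) by (unfold B; assert (exp ((u + 1 - 1) * ln (2 * (u + 1))) <= exp ((V - 1) * ln (2 * V))) by (apply exp_le; auto); lra).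
    assert (G ^ r <= B ^ r) by (apply pow_incr; lra).
    lra. }
  split; [lra|]. split.
  - assert (HL := Gamma_lower (u + 1) ltac:(lra)). fold G in HL. fold K in HL.
    rewrite <- exp_plus in HL.
    assert (ln (exp (4 * (u + 1 - 1) + - (K + 1))) <= ln G) by (apply ln_le; auto; apply exp_pos).
    rewrite ln_exp in H.
    assert (H1 := exp_ineq1_le l). fold u in H1. lra.
  - split; [rewrite hxl; reflexivity|]. split; [|assert (H1 := exp_ineq1_le (c * T)); assert (0 < c * T) by (apply Rmult_lt_0_compat; lra); lra].
    rewrite <- ln_pow by auto. rewrite exp_ln by (apply pow_lt; auto).
    rewrite hGx. unfold L. field. lra.
Qed.

Lemma lim_exp_zero (f : nat -> R) :
  (forall M, exists N, forall m, (N <= m)%nat -> exists E, f m = exp E /\ E <= - M) ->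
  is_lim_seq f 0.
Proof.
  intros H. apply is_lim_seq_spec. intros eps.
  destruct (H (- ln eps + 1)) as [N HN]. exists N. intros m hm.
  destruct (HN m hm) as [E [-> HE]].
  rewrite Rminus_0_r, Rabs_right by (left; apply exp_pos).
  assert (exp E <= exp (ln eps - 1)) by (apply exp_le; lra).
  assert (exp (ln eps - 1) < exp (ln eps)) by (apply exp_increasing; lra).
  rewrite exp_ln in H1 by apply cond_pos. lra.
Qed.

Lemma exp_div (a b : R) : exp a / exp b = exp (a - b).
Proof. unfold Rdiv. rewrite <- exp_Ropp, <- exp_plus. reflexivity. Qed.

Theorem mainTheorem12 (q1 : nat) (hq1 : (2 <= q1)%nat) (s t : R) (hs : 0 < s) (ht : 0 < t)
  (r : nat) (hr : (4 <= r)%nat) :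
  is_lim_seq (fun m => a_int2 q1 r m t / Rpower (INR m) s) 0 /\
  is_lim_seq (fun m => a_int1 q1 r m t / a_int2 q1 r m s) 0 /\
  is_lim_seq (fun m => Rpower (ln (INR m)) t / a_int1 q1 r m s) 0.
Proof.
  set (c := ln (INR q1)).
  assert (hq : 2 <= INR q1) by (replace 2 with (INR 2) by (simpl; ring); apply le_INR; auto).
  assert (hc : 0 < c) by (unfold c; rewrite <- ln_1; apply ln_increasing; lra).
  assert (hr0 : 4 <= INR r) by (replace 4 with (INR 4) by (simpl; ring); apply le_INR; auto).
  assert (hsc : 0 < s * c) by (apply Rmult_lt_0_compat; auto).
  split; [|split]; apply lim_exp_zero; intros M.
  -
    destruct (key q1 r hq1 hr (1 + 2 * t / s + 2 * Rabs M / (s * c))) as [N HN].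
    exists N. intros m hm. destruct (HN m hm) as [l [g [hl [hg [hx [hP hm1]]]]]].
    unfold a_int2, Rpower. fold c in hx, hP |- *. rewrite hx, ln_exp.
    rewrite exp_div. eexists; split; [reflexivity|].
    replace ((INR r - 2) / INR r * (INR r * l)) with ((INR r - 2) * l) by (field; lra).
    rewrite hP.
    assert (h1 : 0 <= 2 * t / s) by (apply Rmult_le_pos; [lra| left; apply Rinv_0_lt_compat; lra]).
    assert (h2 : 0 <= 2 * Rabs M / (s * c)) by (apply Rmult_le_pos; [assert (H := Rabs_pos M); lra| left; apply Rinv_0_lt_compat; lra]).
    set (X := exp ((INR r - 2) * l)).
    assert (hX : exp l <= X) by (apply exp_le; nra).
    assert (hel := exp_ineq1_le l).
    assert (hX2 : 2 * t / s <= X) by lra.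
    assert (hXp : 0 < X) by apply exp_pos.
    assert (htX : t / X <= s / 2).
    { apply (Rmult_le_reg_r X); auto. unfold Rdiv. rewrite Rmult_assoc, Rinv_l by lra.
      apply (Rmult_le_reg_r (2 / s)). { apply Rdiv_lt_0_compat; lra. }
      replace (t * 1 * (2 / s)) with (2 * t / s) by (field; lra).
      replace (s * / 2 * X * (2 / s)) with X by (field; lra). lra. }
    set (P := c * exp (INR r * g)).
    assert (hg0 : 0 <= g) by lra.
    assert (hPg : c * (1 + g) <= P).
    { unfold P. apply Rmult_le_compat_l; [lra|].
      assert (exp g <= exp (INR r * g)) by (apply exp_le; nra).
      assert (Hq := exp_ineq1_le g). lra. }
    assert (hP0 : 0 < P) by (unfold P; apply Rmult_lt_0_compat; [lra|apply exp_pos]).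
    assert (E1 : t / X * P - s * P <= - (s / 2) * P) by nra.
    assert (hM : 2 * Rabs M / (s * c) * (s * c) = 2 * Rabs M) by (field; lra).
    assert (Rabs M <= s * c * l).
    { assert (s * c * (2 * Rabs M / (s * c)) <= s * c * l) by (apply Rmult_le_compat_l; lra).
      replace (s * c * (2 * Rabs M / (s * c))) with (2 * Rabs M) in H by (field; lra).
      assert (Hq := Rabs_pos M). lra. }
    assert (M <= Rabs M) by apply Rle_abs.
    assert ((s / 2) * (c * (1 + g)) <= (s / 2) * P) by (apply Rmult_le_compat_l; lra).
    nra.
  -
    destruct (key q1 r hq1 hr (1 + 2 * t / s + 2 * Rabs M / (s * c))) as [N HN].
    exists N. intros m hm. destruct (HN m hm) as [l [g [hl [hg [hx [hP hm1]]]]]].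
    unfold a_int1, a_int2, Rpower. fold c in hx, hP |- *. rewrite hx, ln_exp.
    rewrite exp_div. eexists; split; [reflexivity|].
    replace ((INR r - 2) / INR r * (INR r * l)) with ((INR r - 2) * l) by (field; lra).
    rewrite hP.
    assert (h1 : 0 <= 2 * t / s) by (apply Rmult_le_pos; [lra| left; apply Rinv_0_lt_compat; lra]).
    assert (h2 : 0 <= 2 * Rabs M / (s * c)) by (apply Rmult_le_pos; [assert (H := Rabs_pos M); lra| left; apply Rinv_0_lt_compat; lra]).
    set (X := exp ((INR r - 2) * l)).
    assert (hXp : 0 < X) by apply exp_pos.
    assert (hx2 : exp (INR r * l) = X * exp (2 * l)) by (unfold X; rewrite <- exp_plus; f_equal; ring).
    rewrite hx2.
    set (Y := exp (2 * l)).
    assert (hY : 2 * t / s <= Y) by (assert (H := exp_ineq1_le (2 * l)); unfold Y; lra).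
    assert (hYp : 0 < Y) by apply exp_pos.
    assert (htY : t / (X * Y) <= (s / 2) / X).
    { unfold Rdiv. rewrite Rinv_mult.
      replace (t * (/ X * / Y)) with (/ X * (t / Y)) by (unfold Rdiv; field; lra).
      replace (s * / 2 * / X) with (/ X * (s / 2)) by (field; lra).
      apply Rmult_le_compat_l; [left; apply Rinv_0_lt_compat; auto|].
      apply (Rmult_le_reg_r Y); auto. unfold Rdiv. rewrite Rmult_assoc, Rinv_l by lra.
      apply (Rmult_le_reg_r (2 / s)). { apply Rdiv_lt_0_compat; lra. }
      replace (t * 1 * (2 / s)) with (2 * t / s) by (field; lra).
      replace (s * / 2 * Y * (2 / s)) with Y by (field; lra). lra. }
    set (P := c * exp (INR r * g)).
    assert (hP0 : 0 < P) by (unfold P; apply Rmult_lt_0_compat; [lra|apply exp_pos]).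
    assert (E1 : t / (X * Y) * P - s / X * P <= - (s / 2) * (P / X)).
    { assert (t / (X * Y) * P <= (s / 2) / X * P) by (apply Rmult_le_compat_r; lra).
      replace (s / X * P) with (s * (P / X)) by (field; lra).
      replace (s / 2 / X * P) with ((s / 2) * (P / X)) in H by (field; lra). lra. }
    assert (hPX : c * (1 + l) <= P / X).
    { unfold P, X. unfold Rdiv. rewrite Rmult_assoc, <- exp_Ropp, <- exp_plus.
      apply Rmult_le_compat_l; [lra|].
      assert (exp l <= exp (INR r * g + - ((INR r - 2) * l))) by (apply exp_le; nra).
      assert (Hq := exp_ineq1_le l). lra. }
    assert (hM : 2 * Rabs M / (s * c) * (s * c) = 2 * Rabs M) by (field; lra).
    assert (Rabs M <= s * c * l).
    { assert (s * c * (2 * Rabs M / (s * c)) <= s * c * l) by (apply Rmult_le_compat_l; lra).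
      replace (s * c * (2 * Rabs M / (s * c))) with (2 * Rabs M) in H by (field; lra).
      assert (Hq := Rabs_pos M). lra. }
    assert (M <= Rabs M) by apply Rle_abs.
    assert ((s / 2) * (c * (1 + l)) <= (s / 2) * (P / X)) by (apply Rmult_le_compat_l; lra).
    nra.
  -
    destruct (key q1 r hq1 hr (1 + (Rabs M + t * Rabs (ln c) + t * INR r + 1) / (s * c))) as [N HN].
    exists N. intros m hm. destruct (HN m hm) as [l [g [hl [hg [hx [hP hm1]]]]]].
    unfold a_int1, Rpower. fold c in hx, hP |- *. rewrite hx.
    rewrite exp_div. eexists; split; [reflexivity|].
    rewrite hP.
    assert (h2 : 0 <= (Rabs M + t * Rabs (ln c) + t * INR r + 1) / (s * c)).
    { apply Rmult_le_pos; [|left; apply Rinv_0_lt_compat; lra].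
      assert (H := Rabs_pos M). assert (H' := Rabs_pos (ln c)). nra. }
    rewrite ln_mult by (auto; apply exp_pos). rewrite ln_exp.
    assert (hg0 : 0 <= g) by lra.
    assert (hl0 : 0 <= l) by lra.
    replace (s / exp (INR r * l) * (c * exp (INR r * g))) with (s * c * exp (INR r * g - INR r * l)).
    2:{ rewrite <- exp_div. field. apply Rgt_not_eq, exp_pos. }
    assert (hZ : exp (g + l) <= exp (INR r * g - INR r * l)) by (apply exp_le; nra).
    rewrite exp_plus in hZ.
    assert (H1 := exp_ineq1_le g). assert (H2 := exp_ineq1_le l).
    assert (hgl : (1 + g) * (1 + l) <= exp g * exp l).
    { apply Rmult_le_compat; lra. }
    assert (hA : s * c * ((1 + g) * (1 + l)) <= s * c * exp (INR r * g - INR r * l)).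
    { apply Rmult_le_compat_l; lra. }
    assert (hB : (Rabs M + t * Rabs (ln c) + t * INR r + 1) <= s * c * l).
    { assert (s * c * ((Rabs M + t * Rabs (ln c) + t * INR r + 1) / (s * c)) <= s * c * l)
        by (apply Rmult_le_compat_l; lra).
      replace (s * c * ((Rabs M + t * Rabs (ln c) + t * INR r + 1) / (s * c))) with
        (Rabs M + t * Rabs (ln c) + t * INR r + 1) in H by (field; lra). lra. }
    assert (M <= Rabs M) by apply Rle_abs.
    assert (t * ln c <= t * Rabs (ln c)) by (apply Rmult_le_compat_l; [lra|apply Rle_abs]).
    assert (hC : (t * INR r + 1) * g <= s * c * l * g).
    { apply Rmult_le_compat_r; auto. assert (Hq1 := Rabs_pos M). assert (Hq2 := Rabs_pos (ln c)). nra. }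
    nra.
Qed.
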